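(* Let $x_1<x_2<x_3$ and $y_1<y_2<y_3$ be real numbers and $Z=(z_{ij})\in\mathbb{R}^{3\times 3}$. Put $P_{ij}:=(x_i,y_j,z_{ij})\in\mathbb{R}^3$ for $i,j\in\{1,2,3\}$, and define $A_i:=\operatorname{conv}\{P_{i1},P_{i2},P_{i3}\}$ and $B_j:=\operatorname{conv}\{P_{1j},P_{2j},P_{3j}\}$. Then either there is a line contained in the plane $\{(x_2,s,t): s,t\in\mathbb{R}\}$ intersecting all of $B_1,B_2,B_3$, or there is a line contained in the plane $\{(s,y_2,t): s,t\in\mathbb{R}\}$ intersecting all of $A_1,A_2,A_3$. *)

(* Defs.v *)
From HB Require Import structures.
From mathcomp Require Import all_boot all_order all_algebra.
From mathcomp Require Import reals.
Set Implicit Arguments. Unset Strict Implicit. Unset Printing Implicit Defensive.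
Import Order.TTheory GRing.Theory Num.Theory.
Local Open Scope ring_scope.

(* the three indices {1,2,3} of the paper are ordinals 0,1,2 of 'I_3 *)
Definition i0 : 'I_3 := @Ordinal 3 0 isT.
Definition i1 : 'I_3 := @Ordinal 3 1 isT.
Definition i2 : 'I_3 := @Ordinal 3 2 isT.

Definition pt3 {R : realType} (a b c : R) : 'rV[R]_3 :=
  \row_(k < 3) (if k == i0 then a else if k == i1 then b else c).

Definition coord {R : realType} (q : 'rV[R]_3) (k : 'I_3) : R := q ord0 k.

Definition conv3 {R : realType} (a b c : 'rV[R]_3) (q : 'rV[R]_3) : Prop :=
  exists (al be ga : R), [/\ 0 <= al, 0 <= be, 0 <= ga, al + be + ga = 1
                         & q = al *: a + be *: b + ga *: c].

Definition is_line {R : realType} (L : 'rV[R]_3 -> Prop) : Prop :=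
  exists (p d : 'rV[R]_3), d != 0 /\ forall q, L q <-> exists t : R, q = p + t *: d.

Definition coord_plane {R : realType} (k : 'I_3) (c : R) (q : 'rV[R]_3) : Prop :=
  coord q k = c.

(* Main.v *)
Require Import Defs.
From HB Require Import structures.
From mathcomp Require Import all_boot all_order all_algebra.
From mathcomp Require Import reals.
From mathcomp Require Import ring lra.
Import Order.TTheory GRing.Theory Num.Theory.
Local Open Scope ring_scope.

Lemma oneD (R : realType) (Q a b M : R) :
  (exists t, ((Q <= t <= b) \/ (b <= t <= Q)) /\ ((M <= t <= a) \/ (a <= t <= M))) \/
  (exists t, ((Q <= t <= a) \/ (a <= t <= Q)) /\ ((M <= t <= b) \/ (b <= t <= M))).
Proof.
case: (lerP Q a) => h1; case: (lerP Q b) => h2; case: (lerP Q M) => h3;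
case: (lerP a b) => h4; case: (lerP a M) => h5; case: (lerP b M) => h6;
first [ left; exists Q; lra | left; exists a; lra | left; exists b; lra | left; exists M; lra
      | right; exists Q; lra | right; exists a; lra | right; exists b; lra | right; exists M; lra].
Qed.

Lemma betw (R : realType) (p q t : R) : (p <= t <= q) \/ (q <= t <= p) ->
  exists th, 0 <= th <= 1 /\ t = th * p + (1 - th) * q.
Proof.
move=> h; case: (ltrgtP p q) => hpq.
- have hd : 0 < q - p by lra.
  exists ((q - t) / (q - p)); split.
    apply/andP; split; first by apply: divr_ge0; lra.
    by rewrite ler_pdivrMr // mul1r; lra.
  by field; rewrite gt_eqF.
- have hd : 0 < p - q by lra.
  exists ((t - q) / (p - q)); split.
    apply/andP; split; first by apply: divr_ge0; lra.
    by rewrite ler_pdivrMr // mul1r; lra.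
  by field; rewrite gt_eqF.
- exists 1; split; first lra. have -> : t = q by lra. by rewrite hpq; ring.
Qed.

Section Side.
Variable R : realType.

Lemma side (E : R -> R -> R -> 'rV[R]_3) (k : 'I_3)
  (hadd : forall a b c a' b' c', E a b c + E a' b' c' = E (a + a') (b + b') (c + c'))
  (hsc : forall s a b c, s *: E a b c = E (s * a) (s * b) (s * c))
  (hk : forall a b c, Defs.coord (E a b c) k = a)
  (hinj : forall b c, E 0 b c = 0 -> b = 0)
  (u v : 'I_3 -> R) (W : 'I_3 -> 'I_3 -> R) (l m : R)
  (hv : v i0 < v i2)
  (hl : l * u i0 + (1 - l) * u i2 = u i1) (hl0 : 0 <= l <= 1)
  (hm : m * v i0 + (1 - m) * v i2 = v i1) (hm0 : 0 <= m <= 1)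
  (th ph : R) (hth : 0 <= th <= 1) (hph : 0 <= ph <= 1)
  (heq : th * (m * (l * W i0 i0 + (1 - l) * W i2 i0) + (1 - m) * (l * W i0 i2 + (1 - l) * W i2 i2))
         + (1 - th) * (m * W i1 i0 + (1 - m) * W i1 i2)
       = ph * W i1 i1 + (1 - ph) * (l * W i0 i1 + (1 - l) * W i2 i1)) :
  exists L : 'rV[R]_3 -> Prop, is_line L /\
     (forall q, L q -> coord_plane k (u i1) q) /\
     (forall j : 'I_3, exists q, L q /\
        conv3 (E (u i0) (v j) (W i0 j)) (E (u i1) (v j) (W i1 j)) (E (u i2) (v j) (W i2 j)) q).
Proof.
set c0 := th * (l * W i0 i0 + (1 - l) * W i2 i0) + (1 - th) * W i1 i0.
set c2 := th * (l * W i0 i2 + (1 - l) * W i2 i2) + (1 - th) * W i1 i2.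
set p := E (u i1) (v i0) c0.
set d := E 0 (v i2 - v i0) (c2 - c0).
have hpd : forall s, p + s *: d = E (u i1) (v i0 + s * (v i2 - v i0)) (c0 + s * (c2 - c0)).
  by move=> s; rewrite /p /d hsc hadd mulr0 addr0.
exists (fun q => exists s, q = p + s *: d); split; last split.
- exists p, d; split => //.
  apply/eqP => /hinj; lra.
- move=> q [s ->]; rewrite /coord_plane hpd hk //.
have key : forall j a1 b1 g1, conv3 (E (u i0) (v j) (W i0 j)) (E (u i1) (v j) (W i1 j)) (E (u i2) (v j) (W i2 j)) (a1 *: E (u i0) (v j) (W i0 j) + b1 *: E (u i1) (v j) (W i1 j) + g1 *: E (u i2) (v j) (W i2 j)) \/ ~ (0 <= a1 /\ 0 <= b1 /\ 0 <= g1 /\ a1 + b1 + g1 = 1).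
  move=> j a1 b1 g1; case: (lerP 0 a1) => ?; last (right; lra).
  case: (lerP 0 b1) => ?; last (right; lra).
  case: (lerP 0 g1) => ?; last (right; lra).
  case: (eqVneq (a1 + b1 + g1) 1) => e; last (right; move=> [_ [_ [_ h]]]; by rewrite h eqxx in e).
  by left; exists a1, b1, g1; split.
move=> j; case: j => [[|[|[|//]]] hj].
- exists p; split; first by exists 0; rewrite scale0r addr0.
  have -> : Ordinal hj = i0 by apply: val_inj.
  case: (key i0 (th * l) (1 - th) (th * (1 - l))) => [|h]; last (exfalso; apply: h; nra).
  rewrite !hsc !hadd /p /c0; congr conv3; congr E.
  + by rewrite -hl; ring.
  + ring.
  + ring.
- exists (p + (1 - m) *: d); split; first by exists (1 - m).
  have -> : Ordinal hj = i1 by apply: val_inj.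
  case: (key i1 ((1 - ph) * l) ph ((1 - ph) * (1 - l))) => [|h]; last (exfalso; apply: h; nra).
  rewrite hpd !hsc !hadd; congr conv3; congr E.
  + by rewrite -hl; ring.
  + by rewrite -hm; ring.
  + transitivity (ph * W i1 i1 + (1 - ph) * (l * W i0 i1 + (1 - l) * W i2 i1)); first ring.
    rewrite -heq /c0 /c2; ring.
- exists (p + 1 *: d); split; first by exists 1.
  have -> : Ordinal hj = i2 by apply: val_inj.
  case: (key i2 (th * l) (1 - th) (th * (1 - l))) => [|h]; last (exfalso; apply: h; nra).
  rewrite hpd !hsc !hadd /c0 /c2; congr conv3; congr E.
  + by rewrite -hl; ring.
  + ring.
  + ring.
Qed.
End Side.

Lemma lam_prop (R : realType) (u : 'I_3 -> R) (h : u i0 < u i1 /\ u i1 < u i2) :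
  let l := (u i2 - u i1) / (u i2 - u i0) in
  l * u i0 + (1 - l) * u i2 = u i1 /\ 0 <= l <= 1.
Proof.
move=> l; have hd : 0 < u i2 - u i0 by lra.
split; first by rewrite /l; field; rewrite gt_eqF.
apply/andP; split; first by apply: divr_ge0; lra.
by rewrite ler_pdivrMr // mul1r; lra.
Qed.

Theorem lemma3 (R : realType) (x y : 'I_3 -> R) (Z : 'M[R]_3)
  (hx : x i0 < x i1 /\ x i1 < x i2) (hy : y i0 < y i1 /\ y i1 < y i2) :
  let P := fun i j => pt3 (x i) (y j) (Z i j) in
  let A := fun i => conv3 (P i i0) (P i i1) (P i i2) in
  let B := fun j => conv3 (P i0 j) (P i1 j) (P i2 j) in
  (exists L : 'rV[R]_3 -> Prop, is_line L /\
     (forall q, L q -> coord_plane i0 (x i1) q) /\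
     (forall j : 'I_3, exists q, L q /\ B j q))
  \/
  (exists L : 'rV[R]_3 -> Prop, is_line L /\
     (forall q, L q -> coord_plane i1 (y i1) q) /\
     (forall i : 'I_3, exists q, L q /\ A i q)).
Proof.
move=> P A B.
have [hl hl0] := lam_prop _ _ hx; have [hm hm0] := lam_prop _ _ hy.
set l := (x i2 - x i1) / (x i2 - x i0) in hl hl0.
set m := (y i2 - y i1) / (y i2 - y i0) in hm hm0.
set Q := m * (l * Z i0 i0 + (1 - l) * Z i2 i0) + (1 - m) * (l * Z i0 i2 + (1 - l) * Z i2 i2).
set b := m * Z i1 i0 + (1 - m) * Z i1 i2.
set a := l * Z i0 i1 + (1 - l) * Z i2 i1.
have h1 : forall a b c a' b' c' : R, pt3 a b c + pt3 a' b' c' = pt3 (a + a') (b + b') (c + c').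
  by move=> *; apply/rowP => k; rewrite !mxE; case: ifP => _ //; case: ifP.
have h2 : forall s a b c : R, s *: pt3 a b c = pt3 (s * a) (s * b) (s * c).
  by move=> *; apply/rowP => k; rewrite !mxE; case: ifP => _ //; case: ifP.
case: (oneD _ Q a b (Z i1 i1)) => -[t [ht1 ht2]].
- left.
  have [th [hth et]] := betw _ _ _ _ ht1; have [ph [hph ep]] := betw _ _ _ _ ht2.
  apply: (@side R pt3 i0 h1 h2 _ _ x y (fun i j => Z i j) l m _ hl hl0 hm hm0 th ph hth hph).
  + by move=> *; rewrite /Defs.coord mxE.
  + by move=> b0 c0 /rowP /(_ i1); rewrite !mxE.
  + lra.
  + by rewrite -et -ep.
- right.
  have [th [hth et]] := betw _ _ _ _ ht1; have [ph [hph ep]] := betw _ _ _ _ ht2.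
  apply: (@side R (fun a b c => pt3 b a c) i1 _ _ _ _ y x (fun i j => Z j i) m l _ hm hm0 hl hl0 th ph hth hph).
  + by move=> *; rewrite h1.
  + by move=> *; rewrite h2.
  + by move=> *; rewrite /Defs.coord mxE.
  + by move=> b0 c0 /rowP /(_ i0); rewrite !mxE.
  + lra.
  + transitivity t; last by rewrite ep /b; ring.
    by rewrite et /Q /a; ring.
Qed.
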